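(* Let $q, q'\in\mathbb{N}_+$, and fix $p,n,\sigma,\vec u,W_i,\mathcal{L}_+,R$ as in the context. Then there exists $\varepsilon_0>0$ such that for every $\varepsilon$ with $0<\varepsilon<\varepsilon_0$, $\varepsilon<\frac{R-p}{2}$ and $\varepsilon^q<\frac{p^q(R^q-p^q)}{((n-1)(p-1)+1)^q}$, every basis $[\vec b_1,\dots,\vec b_n]$ of the lattice $\tilde{\mathcal{L}}=\tilde{\mathcal{L}}(\varepsilon)$ that minimizes $\sum_{i=1}^n\|\vec b_i\|_q^{q'}$ over all bases of $\tilde{\mathcal{L}}$ does not contain $\pm\vec v_1$, the shortest nonzero vector of $\tilde{\mathcal{L}}$.
   Context: Let $p\ge7$ be prime, $n\ge2$, $\sigma\in\{2,3\}^{n-1}$ with $\sum_{i=1}^{n-1}\sigma_i^q=p^q-1$ and $\|k\sigma\bmod p\|_q>\|\sigma\bmod p\|_q$ for all integers $k\not\equiv0,\pm1\pmod p$, where $|\alpha|_p=\min_{z\in\mathbb{Z}}|\alpha-zp|$ and $\|\vec x\bmod p\|_q=(\sum_i|x_i|_p^q)^{1/q}$; if $q\ge2$ assume $4n-3>2p$. Put $\vec u=(1,\sigma)\in\mathbb{R}^n$, $W_i=p\vec e_i$, $\mathcal{L}_+=\operatorname{span}_{\mathbb{Z}}(W_1,\dots,W_n,\vec u)$, and fix $R>p$ with $\mathcal{L}_+\cap\mathcal{B}_q(R)=\{\vec0,\pm W_1,\dots,\pm W_n,\pm\vec u\}$, where $\mathcal{B}_q(r)=\{\vec x:\|\vec x\|_q<r\}$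 and $\|\vec x\|_q=(\sum_i|x_i|^q)^{1/q}$. For $\varepsilon>0$, in $\mathbb{R}^{n+1}$ let $\vec v_1=(W_1,\varepsilon)$, $\vec v_i=(W_i,2\varepsilon)$ for $2\le i\le n$, $\tilde{\vec u}=\frac1p\sum_{i=1}^nu_i\vec v_i$, and $\tilde{\mathcal{L}}(\varepsilon)=\operatorname{span}_{\mathbb{Z}}(\vec v_1,\dots,\vec v_n,\tilde{\vec u})$. *)

(* Defs.v *)
From HB Require Import structures.
From mathcomp Require Import all_boot all_order all_algebra.
From mathcomp Require Import reals exp.
Import Order.TTheory GRing.Theory Num.Theory.
Local Open Scope ring_scope.

(* |a|_p = min_{z in Z} |a - z p|, for an integer a and p > 0:
   with r = a mod p in [0,p), this minimum is min(r, p - r). *)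
Definition absp (p : nat) (a : int) : nat :=
  let r := `|(a %% p%:Z)%Z|%N in minn r (p - r).

Definition lqnorm_modp (R : realType) (q p : nat) (k : nat) (x : 'I_k -> int) : R :=
  powR (\sum_(i < k) ((absp p (x i))%:R ^+ q)) (q%:R^-1).

Definition lqnorm (R : realType) (q : nat) (d : nat) (x : 'rV[R]_d) : R :=
  powR (\sum_(i < d) `|x 0 i| ^+ q) (q%:R^-1).

Definition Zspan (R : realType) (d : nat) (I : finType) (g : I -> 'rV[R]_d)
  (x : 'rV[R]_d) : Prop :=
  exists c : I -> int, x = \sum_(i : I) g i *~ c i.

Definition lattice_basis (R : realType) (d k : nat) (L : 'rV[R]_d -> Prop)
  (b : 'I_k -> 'rV[R]_d) : Prop :=
  (forall c : 'I_k -> R, \sum_(i < k) c i *: b i = 0 -> forall i, c i = 0)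
  /\ (forall x, Zspan R d 'I_k b x <-> L x).

Definition Wvec (R : realType) (n p : nat) (i : 'I_n) : 'rV[R]_n :=
  \row_(j < n) (if j == i then p%:R else 0).

Definition uvec (R : realType) (m : nat) (sigma : 'I_m -> nat) : 'rV[R]_m.+1 :=
  \row_(j < m.+1) (if unlift ord0 j is Some j' then (sigma j')%:R else 1).

Definition Lplus_gen (R : realType) (m p : nat) (sigma : 'I_m -> nat)
  (o : option 'I_m.+1) : 'rV[R]_m.+1 :=
  if o is Some i then Wvec R m.+1 p i else uvec R m sigma.

Definition ext_vec (R : realType) (n : nat) (x : 'rV[R]_n) (t : R) : 'rV[R]_(n + 1) :=
  row_mx x (\row_(j < 1) t).

Definition vvec (R : realType) (m p : nat) (eps : R) (i : 'I_m.+1) : 'rV[R]_(m.+1 + 1) :=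
  ext_vec R m.+1 (Wvec R m.+1 p i) ((if val i == 0%N then 1 else 2) * eps).

Definition utilde (R : realType) (m p : nat) (sigma : 'I_m -> nat) (eps : R)
  : 'rV[R]_(m.+1 + 1) :=
  (p%:R)^-1 *: \sum_(i < m.+1) (uvec R m sigma 0 i) *: vvec R m p eps i.

Definition Ltilde_gen (R : realType) (m p : nat) (sigma : 'I_m -> nat) (eps : R)
  (o : option 'I_m.+1) : 'rV[R]_(m.+1 + 1) :=
  if o is Some i then vvec R m p eps i else utilde R m p sigma eps.

(* Main.v *)
Require Import Defs.
From HB Require Import structures.
From mathcomp Require Import all_boot all_order all_algebra.
From mathcomp Require Import reals exp.
From mathcomp Require Import ring lra zify.
Import Order.TTheory GRing.Theory Num.Theory.
Local Open Scope ring_scope.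

Lemma powRK1 {R : realType} (q : nat) (s : R) : (0 < q)%N -> 0 <= s ->
  (powR s (q%:R^-1)) ^+ q = s.
Proof.
move=> q0 s0; rewrite -powR_mulrn ?powR_ge0 // -powRrM mulVf ?powRr1 //.
by rewrite pnatr_eq0 -lt0n.
Qed.

Lemma powRK2 {R : realType} (q : nat) (a : R) : (0 < q)%N -> 0 <= a ->
  powR (a ^+ q) (q%:R^-1) = a.
Proof.
move=> q0 a0; rewrite -powR_mulrn // -powRrM mulfV ?powRr1 //.
by rewrite pnatr_eq0 -lt0n.
Qed.

Lemma powR_ltE {R : realType} (q : nat) (s r : R) : (0 < q)%N -> 0 <= s -> 0 <= r ->
  (powR s (q%:R^-1) < r) <-> (s < r ^+ q).
Proof.
move=> q0 s0 r0; split=> h.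
  rewrite -(@powRK1 _ q s q0 s0) ltrXn2r ?powR_ge0 //; by rewrite -lt0n.
rewrite -(@powRK2 _ q r q0 r0); apply: gt0_ltr_powR => //.
all: by rewrite ?nnegrE ?invr_gt0 ?ltr0n ?exprn_ge0.
Qed.

Lemma powR_leE {R : realType} (q : nat) (s r : R) : (0 < q)%N -> 0 <= s -> 0 <= r ->
  (r <= powR s (q%:R^-1)) <-> (r ^+ q <= s).
Proof.
move=> q0 s0 r0; split=> h.
- by apply/negP => /negP; rewrite -ltNge => /(@powR_ltE _ q s r q0 s0 r0); rewrite ltNge h.
- by apply/negP => /negP; rewrite -ltNge => /(@powR_ltE _ q s r q0 s0 r0); rewrite ltNge h.
Qed.

Lemma mulmxz {R : realType} a b c (A : 'M[R]_(a, b)) (B : 'M[R]_(b, c)) z :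
  (A *~ z) *m B = (A *m B) *~ z.
Proof. by rewrite -!scaler_int -scalemxAl. Qed.

Lemma Zspan_gen {R : realType} d (I : finType) (g : I -> 'rV[R]_d) o :
  Zspan R d I g (g o).
Proof.
exists (fun i => (i == o)%:Z); rewrite (bigD1 o) //= eqxx big1 ?addr0 //.
by move=> i /negbTE ->.
Qed.

Lemma Zspan_sum {R : realType} d (I J : finType) (g : I -> 'rV[R]_d)
  (h : J -> 'rV[R]_d) (c : J -> int) :
  (forall j, Zspan R d I g (h j)) -> Zspan R d I g (\sum_j h j *~ c j).
Proof.
move=> H; have [e He] := fin_all_exists H.
exists (fun i => \sum_j e j i * c j).
under eq_bigr => j _ do rewrite He mulrz_suml.
rewrite exchange_big /=; apply: eq_bigr => i _.
by rewrite mulrz_sumr; apply: eq_bigr => j _; rewrite mulrzA.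
Qed.

Lemma Zspan_mul {R : realType} d d' (I : finType) (g : I -> 'rV[R]_d)
  (M : 'M[R]_(d, d')) x :
  Zspan R d I g x -> Zspan R d' I (fun i => g i *m M) (x *m M).
Proof.
case=> c ->; exists c; rewrite mulmx_suml; apply: eq_bigr => i _.
by rewrite mulmxz.
Qed.

Definition wt {R : realType} {m : nat} (j : 'I_m.+1) : R := if val j == 0%N then 1 else 2.
Definition Cmat (R : realType) (m p : nat) (eps : R) : 'M[R]_(m.+1, 1) :=
  \matrix_(j, k) (eps * wt j / p%:R).
Definition Lm (R : realType) (m p : nat) (eps : R) : 'M[R]_(m.+1, m.+1 + 1) :=
  row_mx 1%:M (Cmat R m p eps).
Definition fw (R : realType) (m p : nat) (y : 'rV[R]_m.+1) : R :=
  p%:R^-1 * \sum_j wt j * y 0 j.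
Definition sqn (R : realType) (q d : nat) (x : 'rV[R]_d) : R := \sum_i `|x 0 i| ^+ q.

Lemma Lm_ext (R : realType) (m p : nat) (eps : R) (y : 'rV[R]_m.+1) :
  y *m Lm R m p eps = ext_vec R m.+1 y (eps * fw R m p y).
Proof.
rewrite /Lm mul_mx_row mulmx1 /ext_vec; congr row_mx.
apply/rowP => k; rewrite !mxE /fw mulr_sumr mulr_sumr; apply: eq_bigr => j _.
by rewrite !mxE; ring.
Qed.

Lemma sumW (R : realType) (m p : nat) (a : 'I_m.+1 -> R) j :
  (\sum_i a i *: Wvec R m.+1 p i) 0 j = a j * p%:R.
Proof.
rewrite summxE (bigD1 j) //= !mxE eqxx big1 ?addr0 // => i ne.
by rewrite !mxE eq_sym (negbTE ne) mulr0.
Qed.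

Lemma fwW (R : realType) (m p : nat) i : (0 < p)%N ->
  fw R m p (Wvec R m.+1 p i) = wt i.
Proof.
move=> p0; rewrite /fw (bigD1 i) //= !mxE eqxx big1 ?addr0.
  by field; rewrite pnatr_eq0 -lt0n.
by move=> j ne; rewrite !mxE (negbTE ne) mulr0.
Qed.

Lemma uvec_sumW (R : realType) (m p : nat) sigma : (0 < p)%N ->
  p%:R^-1 *: \sum_i uvec R m sigma 0 i *: Wvec R m.+1 p i = uvec R m sigma.
Proof.
move=> p0; apply/rowP => j; rewrite mxE sumW; field.
by rewrite pnatr_eq0 -lt0n.
Qed.

Lemma gen_eq (R : realType) (m p : nat) sigma (eps : R) o : (0 < p)%N ->
  Ltilde_gen R m p sigma eps o = Lplus_gen R m p sigma o *m Lm R m p eps.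
Proof.
move=> p0; case: o => [i|] /=.
  by rewrite Lm_ext fwW // /vvec mulrC.
rewrite /utilde -[in RHS](@uvec_sumW R m p sigma p0) -scalemxAl mulmx_suml; congr (_ *: _).
by apply: eq_bigr => i _; rewrite -scalemxAl Lm_ext fwW // /vvec [_ * eps]mulrC.
Qed.

Lemma Zspan_ext (R : realType) d (I : finType) (g g' : I -> 'rV[R]_d) x :
  g =1 g' -> Zspan R d I g x -> Zspan R d I g' x.
Proof.
move=> e [c ->]; exists c; apply: eq_bigr => i _; by rewrite e.
Qed.

Lemma Lt_char (R : realType) (m p : nat) sigma (eps : R) x : (0 < p)%N ->
  Zspan R (m.+1 + 1) _ (Ltilde_gen R m p sigma eps) x <->
  exists y, Zspan R m.+1 _ (Lplus_gen R m p sigma) y /\ x = y *m Lm R m p eps.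
Proof.
move=> p0; split.
  case=> c ->; exists (\sum_o Lplus_gen R m p sigma o *~ c o); split.
    by exists c.
  rewrite mulmx_suml; apply: eq_bigr => o _; by rewrite mulmxz gen_eq.
case=> y [Hy ->]; apply: (@Zspan_ext R _ _ (fun o => Lplus_gen R m p sigma o *m Lm R m p eps)).

  by move=> o; rewrite gen_eq.
exact: Zspan_mul.
Qed.

Lemma Lm_inj (R : realType) (m p : nat) (eps : R) (y y' : 'rV[R]_m.+1) :
  y *m Lm R m p eps = y' *m Lm R m p eps -> y = y'.
Proof.
by rewrite !Lm_ext /ext_vec => /(congr1 lsubmx); rewrite !row_mxKl.
Qed.

Lemma sqn_Lm (R : realType) (q m p : nat) (eps : R) (y : 'rV[R]_m.+1) :
  sqn R q (m.+1 + 1) (y *m Lm R m p eps) = sqn R q m.+1 y + `|eps * fw R m p y| ^+ q.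
Proof.
rewrite Lm_ext /sqn /ext_vec big_split_ord /= big_ord1; congr (_ + _).
  by apply: eq_bigr => i _; rewrite row_mxEl.
by rewrite row_mxEr mxE.
Qed.

Lemma sqnN (R : realType) (q d : nat) (x : 'rV[R]_d) : sqn R q d (- x) = sqn R q d x.
Proof. by apply: eq_bigr => i _; rewrite mxE normrN. Qed.

Lemma sqn_ge0 (R : realType) (q d : nat) (x : 'rV[R]_d) : 0 <= sqn R q d x.
Proof. by apply: sumr_ge0 => i _; rewrite exprn_ge0. Qed.

Lemma sqnW (R : realType) (q m p : nat) i : (0 < q)%N ->
  sqn R q m.+1 (Wvec R m.+1 p i) = p%:R ^+ q.
Proof.
move=> q0; rewrite /sqn (bigD1 i) //= !mxE eqxx big1 ?addr0 ?normr_nat //.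
by move=> j ne; rewrite !mxE (negbTE ne) normr0 expr0n -[q]prednK.
Qed.

Lemma sqnu (R : realType) (q m p : nat) sigma : (0 < p)%N ->
  (\sum_(j < m) sigma j ^ q)%N = (p ^ q - 1)%N ->
  sqn R q m.+1 (uvec R m sigma) = p%:R ^+ q.
Proof.
move=> p0 hs; rewrite /sqn big_ord_recl /= !mxE unlift_none normr1 expr1n.
under eq_bigr => i _ do rewrite mxE liftK normr_nat -natrX.
rewrite -natr_sum hs natrB ?expn_gt0 ?p0 // natrX; ring.
Qed.

Lemma fwu (R : realType) (m p : nat) sigma :
  fw R m p (uvec R m sigma) = p%:R^-1 * (1 + 2 * (\sum_j sigma j)%:R).
Proof.
rewrite /fw big_ord_recl /= !mxE unlift_none; congr (_ * (_ + _)).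
  by rewrite /wt /= mulr1.
rewrite natr_sum mulr_sumr; apply: eq_bigr => i _; by rewrite !mxE liftK.
Qed.

Definition HypR (R : realType) (q m p : nat) (sigma : 'I_m -> nat) (Rad : R) :=
  forall x : 'rV[R]_m.+1,
      (Zspan R m.+1 (option 'I_m.+1) (Lplus_gen R m p sigma) x /\ lqnorm R q m.+1 x < Rad) <->
      (x = 0 \/ (exists i, x = Wvec R m.+1 p i \/ x = - Wvec R m.+1 p i)
       \/ x = uvec R m sigma \/ x = - uvec R m sigma).

Lemma superadd (R : realType) (q : nat) (a b : R) : (0 < q)%N -> 0 <= a -> 0 <= b ->
  a ^+ q + b ^+ q <= (a + b) ^+ q.
Proof.
move=> q0 a0 b0; elim: q q0 => [//|n IH _]; case: n IH => [|k] IH; first by rewrite !expr1.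
have := IH isT; rewrite !(exprS _ k.+1) => h.
have h1 : (a + b) * (a ^+ k.+1 + b ^+ k.+1) <= (a + b) * (a + b) ^+ k.+1.
  by apply: ler_wpM2l => //; rewrite addr_ge0.
apply: le_trans h1; rewrite mulrDl !mulrDr.
have : 0 <= a * b ^+ k.+1 by rewrite mulr_ge0 ?exprn_ge0.
have : 0 <= b * a ^+ k.+1 by rewrite mulr_ge0 ?exprn_ge0.
lra.
Qed.

Lemma mxz_entry (R : realType) a b (A : 'M[R]_(a, b)) (s : int) i j :
  (A *~ s) i j = s%:~R * A i j.
Proof. by rewrite -scaler_int mxE. Qed.

Lemma sqnz (R : realType) (q d : nat) (x : 'rV[R]_d) (s : int) :
  s = 1 \/ s = -1 -> sqn R q d (x *~ s) = sqn R q d x.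
Proof. by case=> ->; rewrite ?mulr1z ?mulrN1z ?sqnN. Qed.

Lemma short_of (R : realType) (q m p : nat) (sigma : 'I_m -> nat) (Rad : R) (y : 'rV[R]_m.+1) :
  HypR R q m p sigma Rad -> (0 < q)%N -> 0 <= Rad ->
  Zspan R m.+1 _ (Lplus_gen R m p sigma) y -> y != 0 -> sqn R q m.+1 y < Rad ^+ q ->
  exists o (s : int), (s = 1 \/ s = -1) /\ y = Lplus_gen R m p sigma o *~ s.
Proof.
move=> H q0 R0 Hy y0 hs.
have : lqnorm R q m.+1 y < Rad by apply/powR_ltE => //; exact: sqn_ge0.
move=> hl; case: (proj1 (H y) (conj Hy hl)).
  by move=> e; rewrite e eqxx in y0.
case=> [[i [->|->]]|[->|->]].
- by exists (Some i), 1; rewrite mulr1z; split; [left|].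
- by exists (Some i), (-1); rewrite mulrN1z; split; [right|].
- by exists None, 1; rewrite mulr1z; split; [left|].
- by exists None, (-1); rewrite mulrN1z; split; [right|].
Qed.

Lemma sqn_gen (R : realType) (q m p : nat) sigma o : (0 < q)%N -> (0 < p)%N ->
  (\sum_(j < m) sigma j ^ q)%N = (p ^ q - 1)%N ->
  sqn R q m.+1 (Lplus_gen R m p sigma o) = p%:R ^+ q.
Proof. by move=> q0 p0 hs; case: o => [i|] /=; [rewrite sqnW | rewrite (@sqnu R q m p sigma p0 hs)]. Qed.

Lemma low (R : realType) (q m p : nat) (sigma : 'I_m -> nat) (Rad : R) (y : 'rV[R]_m.+1) :
  HypR R q m p sigma Rad -> (0 < q)%N -> (0 < p)%N -> p%:R < Rad ->
  (\sum_(j < m) sigma j ^ q)%N = (p ^ q - 1)%N ->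
  Zspan R m.+1 _ (Lplus_gen R m p sigma) y -> y != 0 -> p%:R ^+ q <= sqn R q m.+1 y.
Proof.
move=> H q0 p0 pR hs Hy y0.
have R0 : 0 <= Rad by apply: le_trans (ltW pR).
case: (ltP (sqn R q m.+1 y) (Rad ^+ q)) => h.
  have [o [s [hs1 ->]]] := @short_of R q m p sigma Rad y H q0 R0 Hy y0 h.
  by rewrite sqnz // (@sqn_gen R q m p sigma o q0 p0 hs).
apply: le_trans h; apply: lerXn2r; rewrite ?nnegrE ?ler0n //; exact: ltW.
Qed.

Lemma fwu_ge1 (R : realType) (q m p : nat) sigma : (0 < q)%N -> (0 < p)%N -> (1 <= m)%N ->
  (forall j, sigma j = 2%N \/ sigma j = 3%N) ->
  (\sum_(j < m) sigma j ^ q)%N = (p ^ q - 1)%N ->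
  ((2 <= q)%N -> (2 * p < 4 * m.+1 - 3)%N) ->
  1 <= fw R m p (uvec R m sigma).
Proof.
move=> q0 p0 m1 hsig hs hq.
have hn : (p <= 1 + 2 * \sum_j sigma j)%N.
  case: q q0 hs hq => // -[|q] _ hs hq.
    have -> : (\sum_j sigma j = \sum_j sigma j ^ 1)%N by apply: eq_bigr => j _; rewrite expn1.
    move: hs.
    by rewrite ?expn1 => ->; lia.
  have h2 : (2 * m <= \sum_j sigma j)%N.
    have : (\sum_(j < m) 2 <= \sum_j sigma j)%N.
      by apply: leq_sum => j _; case: (hsig j) => ->.
    by rewrite sum_nat_const card_ord mulnC.
  have := hq isT; lia.
rewrite fwu; have pp : 0 < (p%:R : R) by rewrite ltr0n.
rewrite -[X in X <= _](mulVf (lt0r_neq0 pp)) ler_pM2l ?invr_gt0 //.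
have : (p%:R : R) <= (1 + 2 * \sum_j sigma j)%N%:R by rewrite ler_nat.
by rewrite natrD natrM.
Qed.

Lemma fwgen_ge1 (R : realType) (q m p : nat) sigma o : (0 < q)%N -> (0 < p)%N -> (1 <= m)%N ->
  (forall j, sigma j = 2%N \/ sigma j = 3%N) ->
  (\sum_(j < m) sigma j ^ q)%N = (p ^ q - 1)%N ->
  ((2 <= q)%N -> (2 * p < 4 * m.+1 - 3)%N) ->
  1 <= `|fw R m p (Lplus_gen R m p sigma o)|.
Proof.
move=> q0 p0 m1 hsig hs hq; case: o => [i|] /=.
  by rewrite fwW // /wt; case: ifP => _; rewrite ?normr1 // normr_nat ler1n.
have h := @fwu_ge1 R q m p sigma q0 p0 m1 hsig hs hq.
by rewrite ger0_norm // (le_trans _ h).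
Qed.

Lemma part1 (R : realType) (q m p : nat) sigma (Rad eps : R) :
  (0 < q)%N -> (0 < p)%N -> (1 <= m)%N ->
  (forall j, sigma j = 2%N \/ sigma j = 3%N) ->
  (\sum_(j < m) sigma j ^ q)%N = (p ^ q - 1)%N ->
  ((2 <= q)%N -> (2 * p < 4 * m.+1 - 3)%N) ->
  p%:R < Rad -> HypR R q m p sigma Rad ->
  0 < eps -> eps < (Rad - p%:R) / 2 ->
  forall x, Zspan R (m.+1 + 1) _ (Ltilde_gen R m p sigma eps) x -> x != 0 ->
  lqnorm R q (m.+1 + 1) (vvec R m p eps ord0) <= lqnorm R q (m.+1 + 1) x.
Proof.
move=> q0 p0 m1 hsig hs hq pR H e0 eR x Hx x0.
have [y [Hy hx]] := proj1 (@Lt_char R m p sigma eps x p0) Hx; subst x.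
have y0 : y != 0 by apply: contraNneq x0 => ->; rewrite mul0mx.
rewrite /lqnorm; apply: ge0_ler_powR; rewrite ?nnegrE ?invr_ge0 ?ler0n ?sumr_ge0 //;
  try by move=> i _; rewrite exprn_ge0.
change (sqn R q _ (vvec R m p eps ord0) <= sqn R q _ (y *m Lm R m p eps)).
have -> : vvec R m p eps ord0 = Wvec R m.+1 p ord0 *m Lm R m p eps.
  exact: (@gen_eq R m p sigma eps (Some ord0) p0).
rewrite sqn_Lm sqnW // fwW // /wt /= mulr1.
have R0 : 0 <= Rad by apply: le_trans (ltW pR).
case: (ltP (sqn R q m.+1 y) (Rad ^+ q)) => h.
  have [o [s [hs1 ->]]] := @short_of R q m p sigma Rad y H q0 R0 Hy y0 h.
  rewrite mulmxz sqnz // sqn_Lm (@sqn_gen R q m p sigma o q0 p0 hs) lerD2l.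
  apply: lerXn2r; rewrite ?nnegrE ?normr_ge0 // normrM.
  apply: ler_peMr => //; exact: (@fwgen_ge1 R q m p sigma o).
have hh : Rad ^+ q <= sqn R q m.+1 y + `|eps * fw R m p y| ^+ q.
  by apply: le_trans h _; rewrite lerDl exprn_ge0.
rewrite sqn_Lm; apply: (le_trans _ hh); rewrite gtr0_norm //.
apply: (le_trans (@superadd R q p%:R eps q0 (ler0n _ p) (ltW e0))).
apply: lerXn2r; rewrite ?nnegrE ?addr_ge0 ?ler0n ?ltW //.
  exact: le_lt_trans (ler0n _ p) pR.
lra.
Qed.

Lemma lift0F n (i : 'I_n) : (lift ord0 i == ord0 :> 'I_n.+1) = false.
Proof. by apply/negbTE; rewrite eq_sym neq_lift. Qed.

Lemma lift0F' n (i : 'I_n) : (ord0 == lift ord0 i :> 'I_n.+1) = false.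
Proof. by apply/negbTE; rewrite neq_lift. Qed.

Definition zb (R : realType) (m p : nat) (sigma : 'I_m -> nat) (j : 'I_m.+1) : 'rV[R]_m.+1 :=
  if j == ord0 then uvec R m sigma else Wvec R m.+1 p j.

Lemma zb_entry (R : realType) (m p : nat) sigma (c : 'I_m.+1 -> R) e :
  (\sum_j c j *: zb R m p sigma j) 0 e =
  c ord0 * uvec R m sigma 0 e + \sum_i c (lift ord0 i) * (if e == lift ord0 i then p%:R else 0).
Proof.
rewrite summxE big_ord_recl /zb eqxx !mxE; congr (_ + _).
by apply: eq_bigr => i _; rewrite lift0F !mxE.
Qed.

Lemma sum_lift_sel (R : realType) m (a : 'I_m.+1 -> R) (x : R) (k : 'I_m) :
  \sum_i a (lift ord0 i) * (if lift ord0 k == lift ord0 i then x else 0) = a (lift ord0 k) * x.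
Proof.
rewrite (bigD1 k) //= eqxx big1 ?addr0 // => i ne.
by rewrite (inj_eq (@lift_inj _ ord0)) eq_sym (negbTE ne) mulr0.
Qed.

Lemma sum_lift_0 (R : realType) m (a : 'I_m.+1 -> R) (x : R) :
  \sum_i a (lift ord0 i) * (if ord0 == lift ord0 i then x else 0) = 0.
Proof. by rewrite big1 // => i _; rewrite lift0F' mulr0. Qed.

Lemma u0 (R : realType) m sigma (i0 : 'I_1) : uvec R m sigma i0 ord0 = 1.
Proof. by rewrite mxE unlift_none. Qed.

Lemma ulift (R : realType) m sigma (i0 : 'I_1) k : uvec R m sigma i0 (lift ord0 k) = (sigma k)%:R.
Proof. by rewrite mxE liftK. Qed.

Definition Bs (R : realType) (m p : nat) sigma (eps : R) (j : 'I_m.+1) :=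
  zb R m p sigma j *m Lm R m p eps.

Lemma Bs_basis (R : realType) (m p : nat) sigma (eps : R) : (0 < p)%N ->
  lattice_basis R (m.+1 + 1) m.+1
    (Zspan R (m.+1 + 1) _ (Ltilde_gen R m p sigma eps)) (Bs R m p sigma eps).
Proof.
move=> p0; have pn0 : (p%:R : R) != 0 by rewrite pnatr_eq0 -lt0n.
split.
  move=> c hc.
  have hz : \sum_j c j *: zb R m p sigma j = 0.
    apply: (@Lm_inj R m p eps); rewrite mul0mx mulmx_suml -[in RHS]hc.
    by apply: eq_bigr => j _; rewrite /Bs scalemxAl.
  have c0 : c ord0 = 0.
    have := congr1 (fun M : 'rV_m.+1 => M 0 ord0) hz.
    move=> /= h; rewrite zb_entry (@sum_lift_0 R m c p%:R) u0 mxE !addr0 mulr1 in h; exact: h.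
  move=> i1; case: (unliftP ord0 i1) => [k|] -> //.
  have := congr1 (fun M : 'rV_m.+1 => M 0 (lift ord0 k)) hz.
  rewrite /= zb_entry sum_lift_sel c0 mul0r add0r mxE => /eqP.
  by rewrite mulf_eq0 (negbTE pn0) orbF => /eqP.
have BsL : forall j, Zspan R (m.+1 + 1) _ (Ltilde_gen R m p sigma eps) (Bs R m p sigma eps j).
  move=> j; rewrite /Bs /zb; case: eqP => _.
    by rewrite -(@gen_eq R m p sigma eps None p0); exact: Zspan_gen.
  by rewrite -(@gen_eq R m p sigma eps (Some j) p0); exact: Zspan_gen.
move=> x; split.
  by case=> c ->; apply: Zspan_sum.
case=> c ->; apply: Zspan_sum => o.
case: o => [i|]; last first.
  rewrite (@gen_eq R m p sigma eps None p0) /=.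
  have -> : uvec R m sigma *m Lm R m p eps = Bs R m p sigma eps ord0 by rewrite /Bs /zb eqxx.
  exact: Zspan_gen.
case: (unliftP ord0 i) => [k|] ->.
  rewrite (@gen_eq R m p sigma eps (Some _) p0) /=.
  have -> : Wvec R m.+1 p (lift ord0 k) *m Lm R m p eps = Bs R m p sigma eps (lift ord0 k).
    by rewrite /Bs /zb lift0F.
  exact: Zspan_gen.
rewrite (@gen_eq R m p sigma eps (Some _) p0) /=.
pose d : 'I_m.+1 -> int := fun j => if unlift ord0 j is Some k then - (sigma k)%:Z else p%:Z.
exists d.
have -> : Wvec R m.+1 p ord0 = \sum_j zb R m p sigma j *~ d j.
  apply/rowP => e.
  have -> : \sum_j zb R m p sigma j *~ d j = \sum_j (d j)%:~R *: zb R m p sigma j.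
    by apply: eq_bigr => j _; rewrite scaler_int.
  rewrite zb_entry.
  case: (unliftP ord0 e) => [k|] ->.
    rewrite (@sum_lift_sel R m (fun j => (d j)%:~R) p%:R k) ulift mxE lift0F /d liftK unlift_none.
    by rewrite intrN !pmulrn mulNr mulrC subrr.
  rewrite big1 ?addr0; last by move=> i2 _; rewrite lift0F' mulr0.
  by rewrite u0 mxE eqxx mulr1 /d unlift_none pmulrn.
rewrite mulmx_suml; apply: eq_bigr => j _; by rewrite mulmxz.
Qed.

Lemma int_entry (R : realType) n (y : 'I_n -> 'rV[R]_n) (c : 'I_n -> int) e (s0 : R) :
  (forall j, exists z : int, y j 0 e = z%:~R * s0) ->
  exists Z : int, (\sum_j y j *~ c j) 0 e = Z%:~R * s0.
Proof.
move=> H; have [z hz] := fin_all_exists H.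
exists (\sum_j c j * z j); rewrite summxE rmorph_sum mulr_suml.
by apply: eq_bigr => j _; rewrite mxz_entry hz rmorphM mulrA.
Qed.

Lemma noshort (R : realType) (m p : nat) sigma (y : 'I_m.+1 -> 'rV[R]_m.+1) i0 :
  prime p -> (7 <= p)%N -> (forall j, sigma j = 2%N \/ sigma j = 3%N) ->
  (forall w, Zspan R m.+1 _ (Lplus_gen R m p sigma) w ->
     exists c : 'I_m.+1 -> int, w = \sum_j y j *~ c j) ->
  (forall j, exists o (s : int), (s = 1 \/ s = -1) /\ y j = Lplus_gen R m p sigma o *~ s) ->
  (exists s : int, (s = 1 \/ s = -1) /\ y i0 = Wvec R m.+1 p ord0 *~ s) ->
  False.
Proof.
move=> pr p7 hsig hspan hshort hi0.
have : forall j, exists o : option 'I_m.+1, (j = i0 -> o = Some ord0) /\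
    exists s : int, (s = 1 \/ s = -1) /\ y j = Lplus_gen R m p sigma o *~ s.
  move=> j; case: (eqVneq j i0) => [->|ne].
    by exists (Some ord0); split.
  have [o [s hs]] := hshort j; exists o; split; last by exists s.
  by move=> e; rewrite e eqxx in ne.
move=> /fin_all_exists [t ht].
have [o ho] : exists o, o \notin codom t.
  case: (pickP (fun o => o \notin codom t)) => [o ho|hall]; first by exists o.
  have : (size (enum {: option 'I_m.+1}) <= size (codom t))%N.
    apply: uniq_leq_size; first exact: enum_uniq.
    by move=> o _; have := hall o; rewrite /= => /negbFE.
  by rewrite size_codom -cardE card_option !card_ord ltnn.
have hi0t : t i0 = Some ord0 by apply: (proj1 (ht i0)).
have ht' : forall j, t j != o.
  by move=> j; apply: contraNneq ho => <-; exact: codom_f.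
have p0 : (0 < p)%N by apply: prime_gt0.
case: o ho ht' => [k|] ho ht'.
  have k0 : k != ord0 by apply: contraNneq (ht' i0) => ->; rewrite hi0t.
  have k0' : ord0 != k by rewrite eq_sym.
  have [k' ek _] := unlift_some k0'.
  have [c hc] := hspan _ (@Zspan_gen R _ _ (Lplus_gen R m p sigma) (Some k)).
  have [Z hZ] : exists Z : int, (\sum_j y j *~ c j) 0 k = Z%:~R * (sigma k')%:R.
    apply: int_entry => j.
    have [_ [s [_ hy]]] := ht j.
    move: (ht' j) hy; case: (t j) => [i|] ne ->.
      have ki : (k == i) = false by apply/negbTE; apply: contraNneq ne => ->.
      by exists 0; rewrite mxz_entry /= !mxE ki mulr0 mul0r.
    by exists s; rewrite mxz_entry /= ek ulift.
  rewrite -hc /= mxE eqxx in hZ.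
  have : p%:Z = Z * (sigma k')%:Z.
    have h1 : ((p%:Z)%:~R : R) = (Z * (sigma k')%:Z)%:~R by rewrite rmorphM /= -hZ.
    exact: (intr_inj h1).
  move=> /(congr1 absz); rewrite abszM /= => hp.
  have hd : (sigma k' %| p)%N by apply/dvdnP; exists `|Z|%N.
  case/primeP: pr => _ /(_ _ hd) /orP [] /eqP e; case: (hsig k') => e'; lia.
have [c hc] := hspan _ (@Zspan_gen R _ _ (Lplus_gen R m p sigma) None).
have [Z hZ] : exists Z : int, (\sum_j y j *~ c j) 0 ord0 = Z%:~R * p%:R.
  apply: int_entry => j.
  have [_ [s [_ hy]]] := ht j.
  move: (ht' j) hy; case: (t j) => [i|] // _ ->.
  exists (s * (ord0 == i)%:Z); rewrite mxz_entry /= !mxE rmorphM /=.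
  by case: eqP => _; rewrite /= ?mulr0 ?mul0r ?mulr1.
rewrite -hc u0 in hZ.
have : (1 : int) = Z * p%:Z.
  have h1 : (1%:~R : R) = (Z * p%:Z)%:~R by rewrite rmorphM /= -hZ.
  exact: (intr_inj h1).
move=> /(congr1 absz); rewrite abszM /= => /esym /eqP.
rewrite muln_eq1 => /andP [_ /eqP p1].
by rewrite p1 in p7.
Qed.

Lemma lqE (R : realType) q d (x : 'rV[R]_d) : lqnorm R q d x = powR (sqn R q d x) (q%:R^-1).
Proof. by []. Qed.

Lemma expr_le_self (R : realType) (q : nat) (x : R) : (0 < q)%N -> 0 <= x -> x <= 1 -> x ^+ q <= x.
Proof.
move=> q0 x0 x1; rewrite -(prednK q0) exprS.
by apply: ler_piMr => //; apply: exprn_ile1.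
Qed.

Lemma sum_const_neq (R : realType) (n : nat) (j1 : 'I_n.+1) (x : R) :
  \sum_(i | i != j1) x = x *+ n.
Proof. by rewrite sumr_const cardC1 card_ord. Qed.

Lemma basis_y (R : realType) (m p : nat) sigma (eps : R) b : (0 < p)%N ->
  lattice_basis R (m.+1 + 1) m.+1 (Zspan R (m.+1 + 1) _ (Ltilde_gen R m p sigma eps)) b ->
  forall j, Zspan R m.+1 _ (Lplus_gen R m p sigma) (lsubmx (b j)) /\
    b j = lsubmx (b j) *m Lm R m p eps.
Proof.
move=> p0 [_ hb] j.
have := proj1 (hb (b j)) (@Zspan_gen R _ _ b j).
move=> /(proj1 (@Lt_char R m p sigma eps _ p0)) [y [Hy ->]].
have e : lsubmx (y *m Lm R m p eps) = y by rewrite Lm_ext /ext_vec row_mxKl.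
by rewrite e.
Qed.

Theorem corollary4p8 (R : realType) (q q' p m : nat) (sigma : 'I_m -> nat) (Rad : R) :
  (0 < q)%N -> (0 < q')%N ->
  prime p -> (7 <= p)%N -> (1 <= m)%N ->
  (forall j, sigma j = 2%N \/ sigma j = 3%N) ->
  (\sum_(j < m) sigma j ^ q)%N = (p ^ q - 1)%N ->
  (forall k : int,
      ~~ (p%:Z %| k)%Z -> ~~ (p%:Z %| k - 1)%Z -> ~~ (p%:Z %| k + 1)%Z ->
      lqnorm_modp R q p m (fun j => k * (sigma j)%:Z) >
      lqnorm_modp R q p m (fun j => (sigma j)%:Z)) ->
  ((2 <= q)%N -> (2 * p < 4 * m.+1 - 3)%N) ->
  p%:R < Rad ->
  (forall x : 'rV[R]_m.+1,
      (Zspan R m.+1 (option 'I_m.+1) (Lplus_gen R m p sigma) x /\ lqnorm R q m.+1 x < Rad) <->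
      (x = 0 \/ (exists i, x = Wvec R m.+1 p i \/ x = - Wvec R m.+1 p i)
       \/ x = uvec R m sigma \/ x = - uvec R m sigma)) ->
  exists eps0 : R, 0 < eps0 /\
    forall eps : R, 0 < eps -> eps < eps0 ->
      eps < (Rad - p%:R) / 2 ->
      eps ^+ q < (p%:R ^+ q * (Rad ^+ q - p%:R ^+ q)) /
                 ((m * (p - 1) + 1)%N%:R ^+ q) ->
      let Lt := Zspan R (m.+1 + 1) (option 'I_m.+1) (Ltilde_gen R m p sigma eps) in
      let v1 := vvec R m p eps ord0 in
      (forall x, Lt x -> x != 0 -> lqnorm R q (m.+1 + 1) v1 <= lqnorm R q (m.+1 + 1) x) /\
      (forall b : 'I_m.+1 -> 'rV[R]_(m.+1 + 1),
         lattice_basis R (m.+1 + 1) m.+1 Lt b ->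
         (forall b' : 'I_m.+1 -> 'rV[R]_(m.+1 + 1), lattice_basis R (m.+1 + 1) m.+1 Lt b' ->
            \sum_(i < m.+1) lqnorm R q (m.+1 + 1) (b i) ^+ q' <=
            \sum_(i < m.+1) lqnorm R q (m.+1 + 1) (b' i) ^+ q') ->
         forall i, b i <> v1 /\ b i <> - v1).
Proof.
move=> q0 q'0 pr p7 m1 hsig hs _ hq pR H.
have p0 : (0 < p)%N by apply: prime_gt0.
have pge0 : (0 : R) <= p%:R by rewrite ler0n.
have R0 : (0 : R) <= Rad by apply: le_trans (ltW pR).
have HR : HypR R q m p sigma Rad by exact: H.
pose c := fw R m p (uvec R m sigma).
have c1 : 1 <= c by exact: (@fwu_ge1 R q m p sigma q0 p0 m1 hsig hs hq).
pose C := c + 2.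
have C0 : 0 < C by rewrite /C; lra.
have mpos : (0 : R) < (m.+1)%:R by rewrite ltr0n.
pose X := (Rad ^+ q' + p%:R ^+ q' *+ m) / (m.+1)%:R.
have rp : p%:R ^+ q' < Rad ^+ q' by rewrite ltrXn2r // -lt0n.
have X0 : 0 <= X.
  by rewrite /X divr_ge0 ?ler0n // addr_ge0 ?mulrn_wge0 ?exprn_ge0.
have pX : p%:R ^+ q' < X.
  rewrite /X ltr_pdivlMr // mulr_natr mulrSr; lra.
pose Y := powR X (q'%:R^-1).
have YX : Y ^+ q' = X by exact: powRK1.
have Y0 : 0 <= Y by exact: powR_ge0.
have pY : p%:R < Y.
  rewrite ltNge; apply/negP => h.
  have : Y ^+ q' <= p%:R ^+ q' by apply: lerXn2r.
  by rewrite YX leNgt pX.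
pose T := Y ^+ q.
have pT : p%:R ^+ q < T by rewrite /T ltrXn2r // -lt0n.
pose e1 := (T - p%:R ^+ q) / C ^+ q.
have e10 : 0 < e1 by rewrite /e1 divr_gt0 ?exprn_gt0 // subr_gt0.
exists (Num.min 1 e1); split; first by rewrite lt_min ltr01 e10.
move=> eps e0; rewrite lt_min => /andP [e_1 e_e1] eR _ Lt v1.
split; first exact: (@part1 R q m p sigma Rad eps q0 p0 m1 hsig hs hq pR HR e0 eR).
move=> b hb hmin.
suff: forall i, b i = v1 \/ b i = - v1 -> False.
  by move=> h i; split => e; apply: (h i); [left|right].
move=> i0 hi0.
pose y := fun j => lsubmx (b j).
have hbj := @basis_y R m p sigma eps b p0 hb.
have y0 : forall j, y j != 0.
  move=> j; apply/negP => /eqP e.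
  have bj0 : b j = 0 by rewrite (proj2 (hbj j)) -/(y j) e mul0mx.
  have := proj1 hb (fun k => (k == j)%:R).
  rewrite (bigD1 j) //= eqxx scale1r bj0 add0r big1; last first.
    by move=> k /negbTE ->; rewrite scale0r.
  by move=> /(_ erefl j); rewrite eqxx; apply/eqP; rewrite oner_eq0.
have hspan : forall w, Zspan R m.+1 _ (Lplus_gen R m p sigma) w ->
    exists c : 'I_m.+1 -> int, w = \sum_j y j *~ c j.
  move=> w Hw.
  have : Lt (w *m Lm R m p eps) by apply/(@Lt_char R m p sigma eps _ p0); exists w.
  move=> /(proj2 hb) [d hd]; exists d; apply: (@Lm_inj R m p eps).
  rewrite hd mulmx_suml; apply: eq_bigr => j _.
  by rewrite mulmxz -(proj2 (hbj j)).
have [j1 hj1] : exists j1, Rad ^+ q <= sqn R q m.+1 (y j1).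
  case: (pickP (fun j => Rad ^+ q <= sqn R q m.+1 (y j))) => [j1 h|hall]; first by exists j1.
  exfalso; apply: (@noshort R m p sigma y i0 pr p7 hsig hspan).
    move=> j.
    have hlt : sqn R q m.+1 (y j) < Rad ^+ q by rewrite ltNge; have := hall j; move=> /= ->.
    exact: (@short_of R q m p sigma Rad (y j) HR q0 R0 (proj1 (hbj j)) (y0 j) hlt).
  have ev1 : v1 = Wvec R m.+1 p ord0 *m Lm R m p eps.
    exact: (@gen_eq R m p sigma eps (Some ord0) p0).
  case: hi0 => e; [exists 1 | exists (-1)]; (split; [by [left|right]|]);
    apply: (@Lm_inj R m p eps); rewrite -(proj2 (hbj i0)) e ev1 mulmxz ?mulr1z ?mulrN1z //.
have lq0 : forall d (x : 'rV[R]_d), 0 <= lqnorm R q d x by move=> d x; rewrite lqE powR_ge0.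
have lowb : forall j, p%:R <= lqnorm R q _ (b j).
  move=> j; rewrite lqE (proj2 (hbj j)); apply/powR_leE => //; first exact: sqn_ge0.
  rewrite sqn_Lm; apply: (le_trans (@low R q m p sigma Rad (y j) HR q0 p0 pR hs (proj1 (hbj j)) (y0 j))).
  by rewrite lerDl exprn_ge0.
have hRj1 : Rad <= lqnorm R q _ (b j1).
  rewrite lqE (proj2 (hbj j1)); apply/powR_leE => //; first exact: sqn_ge0.
  by rewrite sqn_Lm; apply: (le_trans hj1); rewrite lerDl exprn_ge0.
have LB : Rad ^+ q' + p%:R ^+ q' *+ m <= \sum_i lqnorm R q _ (b i) ^+ q'.
  rewrite (bigD1 j1) //=; apply: lerD.
    by apply: lerXn2r; rewrite ?nnegrE.
  have -> : (p%:R : R) ^+ q' *+ m = \sum_(i | i != j1) (p%:R : R) ^+ q'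
    by rewrite (@sum_const_neq R m j1).
  by apply: ler_sum => i _; apply: lerXn2r; rewrite ?nnegrE.
have UB : \sum_i lqnorm R q _ (Bs R m p sigma eps i) ^+ q' < Rad ^+ q' + p%:R ^+ q' *+ m.
  have -> : Rad ^+ q' + p%:R ^+ q' *+ m = \sum_(i < m.+1) X.
    by rewrite sumr_const card_ord -[X *+ _]mulr_natr /X divfK // lt0r_neq0.
  apply: ltr_sum => [|i _]; first by apply/hasP; exists ord0; rewrite ?mem_index_enum.
  have hl : lqnorm R q _ (Bs R m p sigma eps i) < Y.
    rewrite lqE; apply/powR_ltE => //; first exact: sqn_ge0.
    rewrite /Bs sqn_Lm.
    have [hz hf] : sqn R q m.+1 (zb R m p sigma i) = p%:R ^+ q /\ `|fw R m p (zb R m p sigma i)| <= C.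
      rewrite /zb; case: eqP => _.
        rewrite (@sqnu R q m p sigma p0 hs); split => //.
        by rewrite -/c ger0_norm /C; lra.
      rewrite sqnW // fwW //; split => //.
        by rewrite /wt /C; case: ifP => _; rewrite ger0_norm; lra.
    rewrite hz -/T.
    have h1 : `|eps * fw R m p (zb R m p sigma i)| ^+ q <= eps * C ^+ q.
      apply: (@le_trans _ _ ((eps * C) ^+ q)).
        have hh : `|eps * fw R m p (zb R m p sigma i)| <= eps * C by rewrite normrM gtr0_norm // ler_pM2l.
        by apply: (lerXn2r q) => //; rewrite nnegrE ?normr_ge0 // mulr_ge0 // ltW.
      rewrite exprMn; apply: ler_wpM2r; first by rewrite exprn_ge0 // ltW.
      exact: (@expr_le_self R q eps q0 (ltW e0) (ltW e_1)).
    have h2 : eps * C ^+ q < T - p%:R ^+ q by rewrite -ltr_pdivlMr ?exprn_gt0.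
    lra.
  by rewrite -YX ltrXn2r ?lq0 // -lt0n.
have := hmin _ (@Bs_basis R m p sigma eps p0).
move=> h; have := lt_le_trans UB (le_trans LB h).
by rewrite ltxx.
Qed.
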